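(* Let $\delta_q$ satisfy $0<\delta_q<\min\left\{\frac{\sqrt2-1}{|\lambda_1|},\frac{2}{|\lambda_1-\lambda_{\max}|}\right\}$ and set $\delta_e=\min\{\delta^*,\delta_q\}$. Then for all $U\in B(V_*,\eta_a)\cap(\mathcal{V}_0)^N\cap\mathcal{M}_{\leqslant}^{N;N_g}$ and all $s\in[0,\delta_e]$, $$E(U)-E(g(U,s))\geqslant s\Big(\frac12-\frac{s}{2}|\lambda_1|\Big)\Big\|\mathcal{A}_{\frac{\hat g(U,s)+U}{2}}\frac{\hat g(U,s)+U}{2}\Big\|^2.$$
   Context: Let $\mathcal{V}^{N_g}$ be a real Hilbert space of finite dimension $N_g$ with inner product $(\cdot,\cdot)$ (in the paper a finite element subspace of $H_0^1(\Omega)$ with the $L^2(\Omega)$ inner product), and let $H:\mathcal{V}^{N_g}\to\mathcal{V}^{N_g}$ be a self-adjoint linear operator with eigenvalues $\lambda_1\leqslant\lambda_2\leqslant\cdots\leqslant\lambda_{N_g}$, $\lambda_{\max}=\lambda_{N_g}$; it is assumed that $\lambda_1<0$. Fix $N<N_g$ with $\lambda_N<\lambda_{N+1}$. Elements of $(\mathcal{V}^{N_g})^N$ are written $U=(u_1,\dots,u_N)$; $U^\top V=((u_i,v_j))_{i,j=1}^N$; for a real $N\times N$ matrix $A=(a_{kj})$, $UA$ is the element whose $j$-th component is $\sum_k a_{kj}u_k$; $HU=(Hu_1,\dots,Hu_N)$; $\|U\|=\operatorname{tr}(U^\top U)^{1/2}$. For symmetric matrices, $A\leqslant B$ means $B-A$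 is positive semidefinite and $A>0$ positive definite. Set $E(U)=\frac12\operatorname{tr}(U^\top HU)$ and $\nabla E(U)=HU$. For $U$, $\mathcal{A}_U=\nabla E(U)U^\top-U\nabla E(U)^\top$ is the linear operator on $\mathcal{V}^{N_g}$ given by $\mathcal{A}_Uw=\sum_{i=1}^N\big(Hu_i\,(u_i,w)-u_i\,(Hu_i,w)\big)$, applied componentwise. Quasi-Stiefel set: $\mathcal{M}_{\leqslant}^{N;N_g}=\{U:0<U^\top U\leqslant I_N\}$. Let $V_*\in(\mathcal{V}^{N_g})^N$ with $V_*^\top V_*=I_N$ and $HV_*=V_*\operatorname{diag}(\lambda_1,\dots,\lambda_N)$. $\mathcal{O}^N$ is the set of $N\times N$ orthogonal matrices, $\operatorname{dist}([U],[V_*])=\inf_{Q\in\mathcal{O}^N}\|UQ-V_*\|$, $B(U,\eta)=\{W:\|W-U\|\leqslant\eta\}$, $B([V_*],\eta)=\{W:\operatorname{dist}([W],[V_*])\leqslant\eta\}$. For $j=1,\dots,N$, let $\mathcal{V}_{0_j}=\operatorname{span}\{v_{j,1},\dots,v_{j,d_j}\}$ ($d_j\geqslant1$) with each $v_{j,k}$ an eigenvector of $H$, $(\mathcal{V}_0)^N=\mathcal{V}_{0_1}\times\cdots\times\mathcal{V}_{0_N}$, and $\lambda_{\max}^0=\max_{j,k}\frac{(v_{j,k},Hv_{j,k})}{(v_{j,k},v_{j,k})}$. Standing assumption: $\lambda_{\max}^0\leqslant0$. Fix constants $\eta_a,\eta_b,\delta^*>0$ such that (as asserted in the paper) there is a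 unique function $\hat g:B(V_*,\eta_a)\times[0,\delta^*]\to B(V_*,\eta_b)$ with $\hat g(U,s)-U=-s\,\mathcal{A}_{\frac{\hat g(U,s)+U}{2}}\frac{\hat g(U,s)+U}{2}$, and a unique function $g:B([V_*],\eta_a)\times[0,\delta^*]\to B([V_*],\eta_b)$ with $g(U,s)=\hat g(U,s)-s\nabla E(\hat g(U,s))\big(I_N-\hat g(U,s)^\top\hat g(U,s)\big)$ (extended from $B(V_*,\eta_a)$ by $g(UQ,s)=g(U,s)Q$, $Q\in\mathcal{O}^N$). One step of the quasi-orthogonal scheme $\hat U_{n+1}=U_n-s_n\mathcal{A}_{\tilde U}\tilde U$, $\tilde U=\frac{U_n+\hat U_{n+1}}2$, $U_{n+1}=\hat U_{n+1}-s_nH\hat U_{n+1}(I_N-\hat U_{n+1}^\top\hat U_{n+1})$ is given by $\hat U_{n+1}=\hat g(U_n,s_n)$, $U_{n+1}=g(U_n,s_n)$. *)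

(* Defs.v *)
(* finite-dimensional real Hilbert space V^{Ng} modelled in
   orthonormal coordinates as column vectors 'cV[R]_Ng with the standard
   inner product (x,y) = (x^T y); elements of (V^{Ng})^N are Ng x N matrices
   whose j-th column is u_j. *)
From mathcomp Require Import all_boot all_order all_algebra.
From mathcomp Require Import reals.
Set Implicit Arguments. Unset Strict Implicit. Unset Printing Implicit Defensive.
Import Order.TTheory GRing.Theory Num.Theory.
Local Open Scope ring_scope.

Section Defs.
Variable R : realType.

Definition ip (n : nat) (x y : 'cV[R]_n) : R := (x^T *m y) 0 0.

Definition normF (n m : nat) (U : 'M[R]_(n, m)) : R := Num.sqrt (\tr (U^T *m U)).

Definition energy (n m : nat) (H : 'M[R]_n) (U : 'M[R]_(n, m)) : R :=
  2^-1 * \tr (U^T *m (H *m U)).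

(* A_U = grad E(U) U^T - U grad E(U)^T, with grad E(U) = H U, as an operator
   (matrix) on V^{Ng}; A_U W is then  Aop H U *m W  (componentwise). *)
Definition Aop (n m : nat) (H : 'M[R]_n) (U : 'M[R]_(n, m)) : 'M[R]_n :=
  (H *m U) *m U^T - U *m (H *m U)^T.

Definition psdmx (m : nat) (A : 'M[R]_m) : Prop :=
  A^T = A /\ forall x : 'cV[R]_m, 0 <= (x^T *m A *m x) 0 0.
Definition pdmx (m : nat) (A : 'M[R]_m) : Prop :=
  A^T = A /\ forall x : 'cV[R]_m, x != 0 -> 0 < (x^T *m A *m x) 0 0.

Definition quasi_stiefel (n m : nat) (U : 'M[R]_(n, m)) : Prop :=
  pdmx (U^T *m U) /\ psdmx (1%:M - U^T *m U).

Definition ball_mx (n m : nat) (V : 'M[R]_(n, m)) (eta : R) (W : 'M[R]_(n, m)) : Prop :=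
  normF (W - V) <= eta.

Definition midmx (n m : nat) (W U : 'M[R]_(n, m)) : 'M[R]_(n, m) := 2^-1 *: (W + U).

Definition g_of (n m : nat) (H : 'M[R]_n) (ghat : 'M[R]_(n, m) -> R -> 'M[R]_(n, m))
  (U : 'M[R]_(n, m)) (s : R) : 'M[R]_(n, m) :=
  ghat U s - s *: ((H *m ghat U s) *m (1%:M - (ghat U s)^T *m ghat U s)).

Definition rayleigh (n : nat) (H : 'M[R]_n) (v : 'cV[R]_n) : R :=
  ip v (H *m v) / ip v v.

End Defs.

(* Main.v *)
Require Import Defs.
From mathcomp Require Import all_boot all_order all_algebra.
From mathcomp Require Import reals.
From mathcomp Require Import ring lra.
Set Implicit Arguments. Unset Strict Implicit.
Import Order.TTheory GRing.Theory Num.Theory.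
Local Open Scope ring_scope.

Section H.
Variable R : realType.

Definition qf n (Q : 'M[R]_n) (x : 'cV[R]_n) : R := (x^T *m Q *m x) 0 0.

Lemma tr_qf n m (Q : 'M[R]_n) (Y : 'M[R]_(n, m)) :
  \tr (Y^T *m Q *m Y) = \sum_j qf Q (col j Y).
Proof.
rewrite /mxtrace; apply: eq_bigr => j _.
rewrite /qf colE trmx_mul trmx_delta !mulmxA.
rewrite -!rowE -colE !mxE.
by apply: eq_bigr => k _; rewrite -row_mul !mxE.
Qed.

Lemma mE_add m n (A B : 'M[R]_(m,n)) i j : (A + B) i j = A i j + B i j.
Proof. by rewrite mxE. Qed.
Lemma mE_opp m n (A : 'M[R]_(m,n)) i j : (- A) i j = - A i j.
Proof. by rewrite mxE. Qed.
Lemma mE_sub m n (A B : 'M[R]_(m,n)) i j : (A - B) i j = A i j - B i j.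
Proof. by rewrite !mxE. Qed.
Lemma mE_scl m n a (A : 'M[R]_(m,n)) i j : (a *: A) i j = a * A i j.
Proof. by rewrite mxE. Qed.

Lemma qf1_ge0 n (x : 'cV[R]_n) : 0 <= qf 1%:M x.
Proof.
rewrite /qf mulmx1 mxE; apply: sumr_ge0 => i _.
by rewrite mxE -expr2 sqr_ge0.
Qed.

Lemma qf1E n (x : 'cV[R]_n) : qf 1%:M x = (x^T *m x) 0 0.
Proof. by rewrite /qf mulmx1. Qed.

Lemma tr_le n m (Q Q' : 'M[R]_n) (Y : 'M[R]_(n, m)) :
  (forall x, qf Q x <= qf Q' x) -> \tr (Y^T *m Q *m Y) <= \tr (Y^T *m Q' *m Y).
Proof. by move=> h; rewrite !tr_qf; apply: ler_sum => j _. Qed.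

Lemma tr_ge0 n m (Q : 'M[R]_n) (Y : 'M[R]_(n, m)) :
  (forall x, 0 <= qf Q x) -> 0 <= \tr (Y^T *m Q *m Y).
Proof. by move=> h; rewrite !tr_qf; apply: sumr_ge0 => j _. Qed.

Lemma trYY_ge0 n m (Y : 'M[R]_(n, m)) : 0 <= \tr (Y^T *m Y).
Proof. by rewrite -[Y^T]mulmx1; apply: tr_ge0 => x; apply: qf1_ge0. Qed.

Lemma qf_scal1 n c (x : 'cV[R]_n) : qf (c%:M) x = c * qf 1%:M x.
Proof. by rewrite /qf -[c%:M]scalemx1 -scalemxAr -scalemxAl mE_scl. Qed.

Lemma tr_scal n m c (Y : 'M[R]_(n, m)) : \tr (Y^T *m c%:M *m Y) = c * \tr (Y^T *m Y).
Proof. by rewrite -[c%:M]scalemx1 -scalemxAr -scalemxAl mulmx1 mxtraceZ. Qed.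

Lemma MMt n m (M : 'M[R]_(n,m)) :
  (forall x, qf (M^T *m M) x <= qf 1%:M x) -> forall y, qf (M *m M^T) y <= qf 1%:M y.
Proof.
move=> HM y. set z := M^T *m y.
have e1 : qf (M *m M^T) y = (z^T *m z) 0 0 by rewrite /qf /z trmx_mul trmxK !mulmxA.
have e3 : (y^T *m (M *m z)) 0 0 = (z^T *m z) 0 0 by rewrite /z trmx_mul trmxK !mulmxA.
have e4 : ((M *m z)^T *m y) 0 0 = (z^T *m z) 0 0 by rewrite /z !trmx_mul trmxK !mulmxA.
clearbody z.
have e2 : qf (M^T *m M) z = ((M *m z)^T *m (M *m z)) 0 0 by rewrite /qf trmx_mul !mulmxA.
have h0 := qf1_ge0 (y - M *m z).
have h1 := HM z. have h2 := qf1_ge0 z.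
rewrite qf1E !linearB /= !mulmxBl !mE_sub e3 e4 -e2 in h0.
rewrite qf1E in h1. rewrite qf1E in h2. rewrite qf1E e1. lra.
Qed.

Lemma DD n (D : 'M[R]_n) : D^T = D -> (forall x, 0 <= qf D x) ->
  (forall x, qf D x <= qf 1%:M x) -> forall y, qf (D *m D) y <= qf D y.
Proof.
move=> Ds Dp Dl y. set z := D *m y.
have e1 : qf (D *m D) y = (z^T *m z) 0 0.
  by rewrite /qf /z trmx_mul Ds !mulmxA.
have e3 : (y^T *m D *m z) 0 0 = (z^T *m z) 0 0 by rewrite /z trmx_mul Ds !mulmxA.
have e4 : (z^T *m D *m y) 0 0 = (z^T *m z) 0 0 by rewrite /z trmx_mul Ds !mulmxA.
clearbody z.
have h0 := Dp (y - z).
have h1 := Dl z.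
rewrite /qf !linearB /= !mulmxBl !mE_sub e3 e4 in h0.
rewrite qf1E /qf in h1. rewrite e1 /qf. lra.
Qed.

Lemma trD m n (A B : 'M[R]_(m,n)) : (A + B)^T = A^T + B^T. Proof. exact: linearD. Qed.
Lemma trB m n (A B : 'M[R]_(m,n)) : (A - B)^T = A^T - B^T. Proof. exact: linearB. Qed.
Lemma trN m n (A : 'M[R]_(m,n)) : (- A)^T = - A^T. Proof. exact: linearN. Qed.
Lemma trZ m n a (A : 'M[R]_(m,n)) : (a *: A)^T = a *: A^T. Proof. exact: linearZ. Qed.

Lemma ediff n m (M X : 'M[R]_(n, m)) (K : 'M[R]_n) :
  (M + 2^-1 *: X)^T *m K *m (M + 2^-1 *: X) - (M - 2^-1 *: X)^T *m K *m (M - 2^-1 *: X)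
  = M^T *m K *m X + X^T *m K *m M.
Proof.
rewrite trD trB !trZ !mulmxDl !mulmxDr !mulNmx !mulmxN -?scalemxAl -?scalemxAr -?scalemxAl -?scalemxAr.
apply/matrixP => i j; rewrite !(mE_add, mE_sub, mE_scl, mE_opp).
set a := (M^T *m K *m M) i j. set b := (M^T *m K *m X) i j.
set c := (X^T *m K *m M) i j. set e := (X^T *m K *m X) i j.
lra.
Qed.

Lemma H_le n (H P : 'M[R]_n) (lam : nat -> R) lmax :
  P^T *m P = 1%:M -> H = P *m diag_mx (\row_(i < n) lam i) *m P^T ->
  (forall i : 'I_n, lam i <= lmax) ->
  forall x, qf H x <= lmax * qf 1%:M x.
Proof.
move=> HP HH Hl x.
have PPt : P *m P^T = 1%:M by apply: mulmx1C.
have -> : qf 1%:M x = qf 1%:M (P^T *m x).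
  by rewrite /qf !mulmx1 trmx_mul trmxK !mulmxA -[x^T *m P *m P^T]mulmxA PPt mulmx1.
have -> : qf H x = qf (diag_mx (\row_(i < n) lam i)) (P^T *m x).
  by rewrite /qf HH trmx_mul trmxK !mulmxA.
rewrite /qf mulmx1 mul_mx_diag !mxE mulr_sumr; apply: ler_sum => i _.
rewrite !mxE.
have h : 0 <= (P^T *m x) i 0 * (P^T *m x) i 0 by rewrite -expr2 sqr_ge0.
have := Hl i. nra.
Qed.
Lemma mxtrN n (A : 'M[R]_n) : \tr (- A) = - \tr A.
Proof. by rewrite /mxtrace -sumrN; apply: eq_bigr => i _; rewrite mxE. Qed.
Lemma mxtrB n (A B : 'M[R]_n) : \tr (A - B) = \tr A - \tr B.
Proof. by rewrite mxtraceD mxtrN. Qed.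
Lemma par n m (M Z : 'M[R]_(n,m)) :
  (M + Z)^T *m (M + Z) + (M - Z)^T *m (M - Z) = 2%:R *: (M^T *m M + Z^T *m Z).
Proof.
rewrite trD trB !mulmxDl !mulmxDr !mulNmx !mulmxN.
apply/matrixP => i j; rewrite !(mE_add, mE_sub, mE_scl, mE_opp).
lra.
Qed.
End H.
Unset Implicit Arguments. Set Strict Implicit.



Theorem lemma4p3 (R : realType) (Ng N : nat)
  (H : 'M[R]_Ng) (lam : nat -> R) (P : 'M[R]_Ng)
  (* H self-adjoint with eigenvalues lam 0 <= ... <= lam (Ng-1) (0-based:
     lam i = lambda_{i+1}), diagonalized in an orthonormal eigenbasis P *)
  (HHsym : H^T = H)
  (HPorth : P^T *m P = 1%:M)
  (HHdiag : H = P *m diag_mx (\row_(i < Ng) lam i) *m P^T)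
  (Hsorted : forall i j : nat, (i <= j < Ng)%N -> lam i <= lam j)
  (HN : (0 < N < Ng)%N)
  (Hlam1 : lam 0%N < 0)
  (Hgap : lam N.-1 < lam N)
  (* V_* *)
  (Vs : 'M[R]_(Ng, N))
  (HVs1 : Vs^T *m Vs = 1%:M)
  (HVs2 : H *m Vs = Vs *m diag_mx (\row_(i < N) lam i))
  (* the spaces V_{0_j} = span {v_{j,1},...,v_{j,d_j}} of eigenvectors *)
  (d : 'I_N -> nat) (Hd : forall j, (0 < d j)%N)
  (v : forall j : 'I_N, 'I_(d j) -> 'cV[R]_Ng)
  (Hv_eig : forall j k, v j k != 0 /\ exists mu : R, H *m v j k = mu *: v j k)
  (* standing assumption lambda^0_max <= 0 *)
  (Hlam0max : forall j k, rayleigh H (v j k) <= 0)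
  (* constants and the functions ghat, g *)
  (eta_a eta_b delta_star : R)
  (Heta_a : 0 < eta_a) (Heta_b : 0 < eta_b) (Hdelta_star : 0 < delta_star)
  (ghat : 'M[R]_(Ng, N) -> R -> 'M[R]_(Ng, N))
  (Hghat_ex : forall U s, ball_mx Vs eta_a U -> 0 <= s <= delta_star ->
     ball_mx Vs eta_b (ghat U s) /\
     ghat U s - U = - (s *: (Aop H (midmx (ghat U s) U) *m midmx (ghat U s) U)))
  (Hghat_uniq : forall U s W, ball_mx Vs eta_a U -> 0 <= s <= delta_star ->
     ball_mx Vs eta_b W ->
     W - U = - (s *: (Aop H (midmx W U) *m midmx W U)) -> W = ghat U s)
  (* delta_q and delta_e *)
  (delta_q : R)
  (Hdq : 0 < delta_q < Num.min ((Num.sqrt 2 - 1) / `|lam 0%N|)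
                                (2 / `|lam 0%N - lam Ng.-1|))
  (delta_e := Num.min delta_star delta_q) :
  forall (U : 'M[R]_(Ng, N)) (s : R),
    ball_mx Vs eta_a U ->
    (forall j : 'I_N, exists c : 'I_(d j) -> R,
        col j U = \sum_(k < d j) c k *: v j k) ->
    quasi_stiefel U ->
    0 <= s <= delta_e ->
    energy H U - energy H (g_of H ghat U s) >=
      s * (2^-1 - s / 2 * `|lam 0%N|) *
      normF (Aop H (midmx (ghat U s) U) *m midmx (ghat U s) U) ^+ 2.
Proof.
move=> U s HU Hcol HQ Hs.
case/andP: (Hs) => Hs0 Hsm.
move: Hsm; rewrite /delta_e le_min => /andP[Hs1 Hs2].
have Hsd : 0 <= s <= delta_star by rewrite Hs0 Hs1.
have [_ HW] := Hghat_ex U s HU Hsd.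
rewrite /g_of.
set W := ghat U s in HW *.
set M := midmx W U in HW *.
set A := Aop H M in HW *.
have hWM : W = M + 2^-1 *: (W - U).
  rewrite /M /midmx; apply/matrixP => p q; rewrite !mxE; lra.
have hUM : U = M - 2^-1 *: (W - U).
  rewrite /M /midmx; apply/matrixP => p q; rewrite !mxE; lra.
have Askew : A^T = - A.
  by rewrite /A /Aop trB !trmx_mul !trmxK HHsym opprB.
have hA : A = H *m M *m M^T - M *m (H *m M)^T by [].
clearbody A M W.
have hAM : M^T *m A *m M + M^T *m A^T *m M = 0.
  by rewrite Askew mulmxN mulNmx subrr.
have WtW : W^T *m W = U^T *m U.
  have key := ediff M (W - U) 1%:M.
  rewrite -hWM -hUM !mulmx1 HW trN trZ mulmxN mulNmx -scalemxAr -scalemxAl trmx_mul in key.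
  rewrite mulmxA -opprD -scalerDr hAM scaler0 oppr0 in key.
  by apply/eqP; rewrite -subr_eq0 key.
have hD := HQ.2.1. have hDp := HQ.2.2.
have hUp := HQ.1.2.
rewrite WtW.
set D := 1%:M - U^T *m U in hD hDp *.
have e1 : \tr (A *m (H *m M *m M^T)) = - \tr (M^T *m H *m A *m M).
  rewrite !mulmxA mxtrace_mulC -mxtrace_tr !trmx_mul !trmxK HHsym Askew.
  by rewrite !mulmxN mulNmx !mulmxA raddfN.
have e2 : \tr (A *m (M *m (H *m M)^T)) = \tr (M^T *m H *m A *m M).
  by rewrite trmx_mul HHsym !mulmxA mxtrace_mulC !mulmxA mxtrace_mulC !mulmxA.
have t1 : \tr (A^T *m A) = 2 * \tr (M^T *m H *m A *m M).
  rewrite Askew mulNmx raddfN {2}hA mulmxBr raddfB /= e1 e2; lra.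
have E1 : energy H U - energy H W = s * \tr (M^T *m H *m A *m M).
  have key2 := ediff M (W - U) H.
  rewrite -hWM -hUM in key2.
  have := congr1 mxtrace key2; rewrite raddfB raddfD /= => k.
  have e3 : \tr ((W-U)^T *m H *m M) = \tr (M^T *m H *m (W-U)).
    by rewrite -mxtrace_tr !trmx_mul trmxK HHsym !mulmxA.
  rewrite e3 HW mulmxN -scalemxAr mxtrN mxtraceZ !mulmxA in k.
  rewrite /energy !mulmxA; lra.
set G := H *m W.
set Y := G *m D.
have hY : Y = G *m D by []. have hG : G = H *m W by [].
clearbody Y G.
have E2 : energy H W - energy H (W - s *: Y) =
   s * \tr (W^T *m H *m Y) - s ^+ 2 / 2 * \tr (Y^T *m H *m Y).
  have e4 : forall Z : 'M[R]_(Ng, N), \tr (Z^T *m H *m W) = \tr (W^T *m H *m Z).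
    by move=> Z; rewrite -mxtrace_tr !trmx_mul trmxK HHsym !mulmxA.
  rewrite /energy !mulmxA trB trZ !mulmxDl !mulmxDr !mulNmx !mulmxN -?scalemxAl -?scalemxAr -?scalemxAl -?scalemxAr.
  rewrite !(mxtraceD, mxtrN, mxtraceZ) e4; lra.
have hGt : G^T = W^T *m H by rewrite hG trmx_mul HHsym.
have T1e : \tr (W^T *m H *m Y) = \tr ((G^T)^T *m D *m G^T).
  by rewrite trmxK hY mxtrace_mulC hGt !mulmxA.
have T1ge : 0 <= \tr (W^T *m H *m Y) by rewrite T1e; apply: tr_ge0.
have hDs : D^T = D := hD.
have hDl : forall x, qf D x <= qf 1%:M x.
  move=> x; rewrite /D /qf mulmxBr mulmxBl mE_sub.
  have [->|nz] := eqVneq x 0; first by rewrite trmx0 !mul0mx !mxE subrr.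
  have := hUp x nz; lra.
have T3le : \tr (Y^T *m Y) <= \tr (W^T *m H *m Y).
  rewrite T1e hY trmx_mul mxtrace_mulC !mulmxA.
  rewrite hDs.
  have -> : G *m D *m D *m G^T = (G^T)^T *m (D *m D) *m G^T by rewrite trmxK !mulmxA.
  by apply: tr_le; apply: DD.
have T3ge : 0 <= \tr (Y^T *m Y) := trYY_ge0 _.
have Hlmax : forall i : 'I_Ng, lam i <= lam Ng.-1.
  move=> i; apply: Hsorted; have h := ltn_ord i.
  by apply/andP; split; [rewrite -ltnS (ltn_predK h) | rewrite -[X in (_ < X)%N](ltn_predK h)].
have T2le : \tr (Y^T *m H *m Y) <= lam Ng.-1 * \tr (Y^T *m Y).
  rewrite -tr_scal; apply: tr_le => x; rewrite qf_scal1.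
  exact: (H_le HPorth HHdiag Hlmax x).
have UMZ : U^T *m U = M^T *m M + (2^-1 *: (W - U))^T *m (2^-1 *: (W - U)).
  have := par M (2^-1 *: (W - U)).
  rewrite -hWM -hUM WtW => /matrixP hp; apply/matrixP => p q.
  have := hp p q; rewrite !(mE_add, mE_scl); lra.
have MtM : forall x, qf (M^T *m M) x <= qf 1%:M x.
  move=> x; set Z := 2^-1 *: (W - U).
  have q1 : qf D x = qf 1%:M x - qf (U^T *m U) x by rewrite /D /qf mulmxBr mulmxBl mE_sub.
  have q2 : qf (U^T *m U) x = qf (M^T *m M) x + qf (Z^T *m Z) x.
    by rewrite UMZ /qf mulmxDr mulmxDl mE_add.
  have q3 : qf (Z^T *m Z) x = qf 1%:M (Z *m x) by rewrite /qf mulmx1 trmx_mul !mulmxA.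
  have := hDp x; have := qf1_ge0 (Z *m x).
  rewrite -/(qf D x) q1 q2 q3; lra.
have NF : normF (A *m M) ^+ 2 <= \tr (A^T *m A).
  rewrite /normF sqr_sqrtr ?trYY_ge0 //.
  have -> : \tr ((A *m M)^T *m (A *m M)) = \tr ((A^T)^T *m (M *m M^T) *m A^T).
    by rewrite trmx_mul trmxK mxtrace_mulC !mulmxA.
  have -> : \tr (A^T *m A) = \tr ((A^T)^T *m 1%:M *m A^T).
    by rewrite trmxK mulmx1 mxtrace_mulC.
  by apply: tr_le; apply: MMt; exact: MtM.
have slmax : s * lam Ng.-1 <= 2.
  case/andP: Hdq => _; rewrite lt_min => /andP[_ hq2].
  have [hl|hl] := lerP (lam Ng.-1) 0; first by nra.
  have l0 : lam 0%N <= lam Ng.-1.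
    apply: Hsorted; apply/andP; split => //.
    have h : (0 < Ng)%N by case/andP: HN => h1 h2; exact: leq_ltn_trans h2.
    by rewrite -[X in (_ < X)%N](ltn_predK h).
  have k : `|lam 0%N - lam Ng.-1| = lam Ng.-1 - lam 0%N by rewrite distrC ger0_norm // subr_ge0.
  have kp : 0 < lam Ng.-1 - lam 0%N by lra.
  rewrite k ltr_pdivlMr // in hq2.
  have h3 : s * (lam Ng.-1 - lam 0%N) <= delta_q * (lam Ng.-1 - lam 0%N).
    by apply: ler_wpM2r; lra.
  nra.
have nfge : 0 <= normF (A *m M) ^+ 2 := sqr_ge0 _.
have -> : energy H U - energy H (W - s *: Y) =
  (energy H U - energy H W) + (energy H W - energy H (W - s *: Y)) by lra.
rewrite E1 E2.
have L0 : 0 <= `|lam 0%N| := normr_ge0 _.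
have part1 : s * (2^-1 - s / 2 * `|lam 0%N|) * normF (A *m M) ^+ 2 <= s * \tr (M^T *m H *m A *m M).
  have h1 : 0 <= s * s * `|lam 0%N| * normF (A *m M) ^+ 2 by do 3 (apply: mulr_ge0 => //).
  have h2 : s * normF (A *m M) ^+ 2 <= s * (2 * \tr (M^T *m H *m A *m M)) by apply: ler_wpM2l => //; lra.
  nra.
have part2 : 0 <= s * (\tr (W^T *m H *m Y)) - s ^+ 2 / 2 * (\tr (Y^T *m H *m Y)).
  have s2 : 0 <= s ^+ 2 := sqr_ge0 _.
  have sT1 : 0 <= s * (\tr (W^T *m H *m Y)) by apply: mulr_ge0.
  have [hl|hl] := lerP 0 (lam Ng.-1).
    have h1 : (\tr (Y^T *m H *m Y)) <= lam Ng.-1 * (\tr (W^T *m H *m Y)).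
      have := ler_wpM2l hl T3le. lra.
    have ha : s ^+ 2 * (\tr (Y^T *m H *m Y)) <= s ^+ 2 * (lam Ng.-1 * (\tr (W^T *m H *m Y))) by apply: ler_wpM2l.
    have hb : (s * lam Ng.-1) * (s * (\tr (W^T *m H *m Y))) <= 2 * (s * (\tr (W^T *m H *m Y))) by apply: ler_wpM2r.
    have e : s ^+ 2 * (lam Ng.-1 * (\tr (W^T *m H *m Y))) = (s * lam Ng.-1) * (s * (\tr (W^T *m H *m Y))) by rewrite expr2; ring.
    lra.
  have h1 : (\tr (Y^T *m H *m Y)) <= 0.
    have : lam Ng.-1 * (\tr (Y^T *m Y)) <= 0 by nra.
    lra.
  have ha : s ^+ 2 * (\tr (Y^T *m H *m Y)) <= 0 by nra.
  lra.
lra.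
Qed.
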